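(* Let $1\le q_1<q_2<\cdots$ be a strictly increasing sequence of integers satisfying $q_{n+1}<2q_n$ for all $n\in\mathbb{N}$, and let $S_n=q_1+\dots+q_n$. Let $k_0\ge 0$ be an integer. Then $S_n-q_{n+1}\ge 2k_0$ for every integer $n\ge q_1+2k_0+1$. *)

(* Defs.v *)
From mathcomp Require Import all_boot.
(* Sequences are 1-indexed: q 1, q 2, ...; the value q 0 is irrelevant. *)
Definition partial_sum (q : nat -> nat) (n : nat) : nat := \sum_(1 <= i < n.+1) q i.

(* Main.v *)
Require Import Defs.
From mathcomp Require Import all_boot.
From mathcomp Require Import zify.

Lemma ps_rec (q : nat -> nat) n : partial_sum q n.+1 = partial_sum q n + q n.+1.
Proof. by rewrite /partial_sum big_nat_recr. Qed.

Theorem lemma2p2 (q : nat -> nat) (k0 : nat)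
  (hq1 : 1 <= q 1)
  (hinc : forall n, 1 <= n -> q n < q n.+1)
  (hgrow : forall n, 1 <= n -> q n.+1 < 2 * q n) :
  forall n, q 1 + 2 * k0 + 1 <= n ->
    q n.+1 + 2 * k0 <= partial_sum q n.
Proof.
have key : forall n, q n.+2 + n.+1 <= partial_sum q n.+1 + q 1.
  elim=> [|n IH].
    rewrite ps_rec /partial_sum big_geq //.
    have := hgrow 1 isT; lia.
  rewrite ps_rec.
  have := hgrow n.+2 isT; lia.
case=> [|n] hn; first lia.
have := key n; lia.
Qed.
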